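(* Under the setting below, for every $k\in\mathbb{N}_0$: $Z_k(0)<0$ and $\lim_{\tau\to\tau^{*-}}Z_k(\tau)=-\infty$. Consequently, if $Z_k$ has finitely many zeros in $[0,\tau^* )$ and changes sign at each of them, then the number of zeros is even. Moreover, $Z_{k+1}(\tau)<Z_k(\tau)$ for all $\tau\in[0,\tau^* )$, and if $Z_k$ has no root in $[0,\tau^* )$ then $Z_j$ has no root in $[0,\tau^* )$ for every $j>k$.
   Context: Let $\delta>0$ and $\beta:[0,+\infty)\to(0,+\infty)$ continuously differentiable, strictly decreasing, with $\beta'(s)<0$ for $s>0$, $\lim_{S\to+\infty}\beta(S)=0$, and $\delta<\beta(0)$. Let $\bar\tau:=\frac1\delta\ln\!\big(\frac{2\beta(0)}{\delta+\beta(0)}\big)$, $\beta^{-1}$ the inverse of $\beta$ on $(0,\beta(0)]$, and for $\tau\in[0,\bar\tau)$: $S^*(\tau)=\beta^{-1}\!\big(\frac{\delta}{2e^{-\delta\tau}-1}\big)$, $N^*(\tau)=(2e^{-\delta\tau}-1)e^{\delta\tau}S^*(\tau)$, $A(\tau)=\delta+\beta(S^*(\tau))$, $B(\tau)=[2\beta(S^*(\tau))+N^*(\tau)\beta'(S^*(\tau))]e^{-\delta\tau}$. Let $\chi(y)=y\beta'(y)$ and assume (H$_1$) $\chi$ is decreasing on $[0,\beta^{-1}(\delta)]$ and (H$_2$) $\chi(\beta^{-1}(\delta))<-4\delta$. Then there is a unique $\tau^*\in(0,\bar\tau)$ such that $A(\tau)<|B(\tau)|$ (with $B(\tau)<0$)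 exactly for $\tau\in[0,\tau^* )$. For $k\in\mathbb{N}_0$ (nonnegative integers) and $\tau\in[0,\tau^* )$ define $\tau_k(\tau)=\dfrac{\arccos(A(\tau)/B(\tau))+2k\pi}{\sqrt{B(\tau)^2-A(\tau)^2}}$ and $Z_k(\tau)=\tau-\tau_k(\tau)$, with $\arccos$ valued in $[0,\pi]$. *)

(* Defs.v *)
From Stdlib Require Import Reals Lra List ClassicalEpsilon.
Open Scope R_scope.

(* beta^{-1} on (0, beta(0)]: some s >= 0 with beta s = y (unique when beta is
   strictly decreasing on [0,+oo) and y in (0, beta 0]). *)
Definition beta_inv (beta : R -> R) (y : R) : R :=
  epsilon (inhabits 0) (fun s => 0 <= s /\ beta s = y).

Definition tau_bar (beta : R -> R) (delta : R) : R :=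
  / delta * ln (2 * beta 0 / (delta + beta 0)).

Definition Sstar (beta : R -> R) (delta tau : R) : R :=
  beta_inv beta (delta / (2 * exp (- delta * tau) - 1)).

Definition Nstar (beta : R -> R) (delta tau : R) : R :=
  (2 * exp (- delta * tau) - 1) * exp (delta * tau) * Sstar beta delta tau.

Definition Acoef (beta : R -> R) (delta tau : R) : R :=
  delta + beta (Sstar beta delta tau).

(* dbeta plays the role of beta' *)
Definition Bcoef (beta dbeta : R -> R) (delta tau : R) : R :=
  (2 * beta (Sstar beta delta tau)
     + Nstar beta delta tau * dbeta (Sstar beta delta tau)) * exp (- delta * tau).

Definition tau_k (beta dbeta : R -> R) (delta : R) (k : nat) (tau : R) : R :=
  (acos (Acoef beta delta tau / Bcoef beta dbeta delta tau) + 2 * INR k * PI)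
  / sqrt (Bcoef beta dbeta delta tau ^ 2 - Acoef beta delta tau ^ 2).

Definition Zk (beta dbeta : R -> R) (delta : R) (k : nat) (tau : R) : R :=
  tau - tau_k beta dbeta delta k tau.

Definition changes_sign_at (f : R -> R) (t : R) : Prop :=
  exists eps, 0 < eps /\
    ((forall s, t - eps < s < t -> f s < 0) /\ (forall s, t < s < t + eps -> 0 < f s)
     \/
     (forall s, t - eps < s < t -> 0 < f s) /\ (forall s, t < s < t + eps -> f s < 0)).

(* Main.v *)
Require Import Defs.
From Stdlib Require Import Reals Lra List Arith Lia ClassicalEpsilon Ranalysis5.
Open Scope R_scope.

Lemma cont_eps f x0 : continuity_pt f x0 -> forall eps, 0 < eps ->
  exists alp, 0 < alp /\ forall x, Rabs (x - x0) < alp -> Rabs (f x - f x0) < eps.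
Proof.
  intros H eps He. destruct (H eps He) as [alp [Ha Hx]].
  exists alp; split; auto. intros x Hxa.
  destruct (Req_dec x x0) as [->|Hne].
  - rewrite Rminus_diag, Rabs_R0; lra.
  - apply (Hx x). split. split. exact I. auto. exact Hxa.
Qed.

Lemma eps_cont f x0 : (forall eps, 0 < eps ->
  exists alp, 0 < alp /\ forall x, Rabs (x - x0) < alp -> Rabs (f x - f x0) < eps) ->
  continuity_pt f x0.
Proof.
  intros H eps He. destruct (H eps He) as [alp [Ha Hx]].
  exists alp; split; auto. intros x [_ Hxa]. apply Hx; exact Hxa.
Qed.

Lemma cp_plus f g x : continuity_pt f x -> continuity_pt g x -> continuity_pt (fun t => f t + g t) x.
Proof. intros; apply (continuity_pt_plus f g); auto. Qed.
Lemma cp_minus f g x : continuity_pt f x -> continuity_pt g x -> continuity_pt (fun t => f t - g t) x.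
Proof. intros; apply (continuity_pt_minus f g); auto. Qed.
Lemma cp_mult f g x : continuity_pt f x -> continuity_pt g x -> continuity_pt (fun t => f t * g t) x.
Proof. intros; apply (continuity_pt_mult f g); auto. Qed.
Lemma cp_div f g x : continuity_pt f x -> continuity_pt g x -> g x <> 0 -> continuity_pt (fun t => f t / g t) x.
Proof. intros; apply (continuity_pt_div f g); auto. Qed.
Lemma cp_const c x : continuity_pt (fun _ => c) x.
Proof. apply (continuity_pt_const (fct_cte c)). intros a b; reflexivity. Qed.
Lemma cp_id x : continuity_pt (fun t => t) x.
Proof. apply derivable_continuous_pt, derivable_pt_id. Qed.
Lemma cp_comp f g x : continuity_pt g x -> continuity_pt f (g x) -> continuity_pt (fun t => f (g t)) x.
Proof. intros; apply (continuity_pt_comp g f); auto. Qed.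
Lemma cp_exp x : continuity_pt exp x.
Proof. apply derivable_continuous_pt, derivable_pt_exp. Qed.
Lemma cp_sq f x : continuity_pt f x -> continuity_pt (fun t => f t ^ 2) x.
Proof. intros; apply (cp_comp (fun y => y ^ 2) f); auto. apply derivable_continuous_pt, derivable_pt_pow. Qed.

Lemma binv_exists (beta : R -> R)
  (Hc : forall s, 0 <= s -> continuity_pt beta s)
  (Hdec : forall s t, 0 <= s -> s < t -> beta t < beta s)
  (Hlim : forall eps, 0 < eps -> exists M, forall S, M < S -> beta S < eps) :
  forall y, 0 < y <= beta 0 -> exists s, 0 <= s /\ beta s = y.
Proof.
  intros y [Hy0 Hy1].
  destruct (Req_dec y (beta 0)) as [->|Hne]. { exists 0; split; [lra|auto]. }
  destruct (Hlim y Hy0) as [M HM].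
  set (S := Rmax M 0 + 1).
  assert (HS : M < S /\ 0 < S) by (unfold S; pose proof (Rmax_l M 0); pose proof (Rmax_r M 0); lra).
  destruct (IVT_interv (fun s => y - beta s) 0 S) as [z [Hz1 Hz2]].
  - intros a Ha. apply cp_minus. apply cp_const. apply Hc; lra.
  - lra.
  - lra.
  - pose proof (HM S (proj1 HS)); lra.
  - exists z; split; lra.
Qed.

Lemma binv_spec (beta : R -> R)
  (Hc : forall s, 0 <= s -> continuity_pt beta s)
  (Hdec : forall s t, 0 <= s -> s < t -> beta t < beta s)
  (Hlim : forall eps, 0 < eps -> exists M, forall S, M < S -> beta S < eps) :
  forall y, 0 < y <= beta 0 -> 0 <= beta_inv beta y /\ beta (beta_inv beta y) = y.
Proof.
  intros y Hy. unfold beta_inv. apply epsilon_spec.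
  apply binv_exists; auto.
Qed.

Lemma binv_cont (beta : R -> R)
  (Hc : forall s, 0 <= s -> continuity_pt beta s)
  (Hdec : forall s t, 0 <= s -> s < t -> beta t < beta s)
  (Hlim : forall eps, 0 < eps -> exists M, forall S, M < S -> beta S < eps)
  (Hpos : forall s, 0 <= s -> 0 < beta s) :
  forall y0, 0 < y0 < beta 0 -> continuity_pt (beta_inv beta) y0.
Proof.
  intros y0 Hy0.
  assert (Hwk : forall s t, 0 <= s -> s <= t -> beta t <= beta s).
  { intros s t Hs Hst. destruct (Req_dec s t) as [->|]; [lra|]. left; apply Hdec; lra. }
  destruct (binv_spec beta Hc Hdec Hlim y0 ltac:(lra)) as [Hs0 Hb0].
  set (s0 := beta_inv beta y0) in *.
  assert (Hs0p : 0 < s0).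
  { destruct (Req_dec s0 0) as [E|]; [|lra]. rewrite E in Hb0; lra. }
  apply eps_cont. intros eps He.
  set (e := Rmin eps s0 / 2).
  assert (He1 : 0 < e /\ e < eps /\ e < s0).
  { unfold e; pose proof (Rmin_l eps s0); pose proof (Rmin_r eps s0).
    assert (0 < Rmin eps s0) by (apply Rmin_pos; lra). lra. }
  assert (H1 : beta (s0 + e) < y0) by (rewrite <- Hb0; apply Hdec; lra).
  assert (H2 : y0 < beta (s0 - e)) by (rewrite <- Hb0; apply Hdec; lra).
  exists (Rmin (y0 - beta (s0 + e)) (beta (s0 - e) - y0)).
  split.
  { apply Rmin_pos; lra. }
  intros y Hy.
  pose proof (Rmin_l (y0 - beta (s0 + e)) (beta (s0 - e) - y0)).
  pose proof (Rmin_r (y0 - beta (s0 + e)) (beta (s0 - e) - y0)).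
  apply Rabs_def2 in Hy.
  assert (Hy1 : beta (s0 + e) < y < beta (s0 - e)) by lra.
  assert (Hb : beta (s0 + e) > 0) by (apply Hpos; lra).
  assert (Hle : beta (s0 - e) <= beta 0) by (apply Hwk; lra).
  destruct (binv_spec beta Hc Hdec Hlim y ltac:(lra)) as [Hs Hby].
  set (s := beta_inv beta y) in *.
  assert (s < s0 + e).
  { destruct (Rlt_le_dec s (s0 + e)); auto. pose proof (Hwk (s0+e) s ltac:(lra) r). lra. }
  assert (s0 - e < s).
  { destruct (Rlt_le_dec (s0 - e) s); auto. pose proof (Hwk s (s0-e) Hs r). lra. }
  fold s0. apply Rabs_def1; lra.
Qed.

Lemma yv_range (beta : R -> R) (delta tau : R) :
  0 < delta -> delta < beta 0 -> 0 <= tau < tau_bar beta delta ->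
  0 < 2 * exp (- delta * tau) - 1 /\
  delta <= delta / (2 * exp (- delta * tau) - 1) < beta 0.
Proof.
  intros Hd Hb [Ht0 Ht1]. unfold tau_bar in Ht1.
  assert (Hq : 0 < 2 * beta 0 / (delta + beta 0)).
  { apply Rdiv_lt_0_compat; lra. }
  assert (H1 : delta * tau < ln (2 * beta 0 / (delta + beta 0))).
  { apply Rmult_lt_compat_l with (r := delta) in Ht1; auto.
    rewrite <- Rmult_assoc, Rinv_r, Rmult_1_l in Ht1; lra. }
  apply exp_increasing in H1. rewrite exp_ln in H1 by auto.
  assert (Hu : exp (- delta * tau) = / exp (delta * tau)).
  { rewrite <- exp_Ropp. f_equal; ring. }
  assert (Hpe : 0 < exp (delta * tau)) by apply exp_pos.
  assert (Hle1 : exp (- delta * tau) <= 1).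
  { rewrite <- exp_0. destruct (Req_dec (- delta * tau) 0) as [E|E].
    - rewrite E; lra.
    - left; apply exp_increasing. nra. }
  set (u := exp (- delta * tau)) in *.
  assert (Hu2 : u * exp (delta * tau) = 1) by (rewrite Hu; field; lra).
  assert (Hlow : (delta + beta 0) < u * (2 * beta 0)).
  { unfold Rdiv in H1.
    assert (exp (delta*tau) * (delta + beta 0) < 2 * beta 0).
    { apply Rmult_lt_compat_r with (r := delta + beta 0) in H1; [|lra].
      rewrite Rmult_assoc, Rinv_l in H1; lra. }
    nra. }
  assert (Hd0 : 0 < 2 * u - 1) by nra.
  split; auto.
  split.
  - apply Rmult_le_reg_r with (2*u-1); auto.
    unfold Rdiv; rewrite Rmult_assoc, Rinv_l by lra. nra.
  - apply Rmult_lt_reg_r with (2*u-1); auto.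
    unfold Rdiv; rewrite Rmult_assoc, Rinv_l by lra. nra.
Qed.

Lemma yv_cont (delta t0 : R) : 2 * exp (- delta * t0) - 1 <> 0 ->
  continuity_pt (fun t => delta / (2 * exp (- delta * t) - 1)) t0.
Proof.
  intros H. apply cp_div; auto. apply cp_const.
  apply cp_minus; [|apply cp_const]. apply cp_mult; [apply cp_const|].
  apply (cp_comp exp (fun t => - delta * t)); [|apply cp_exp].
  apply cp_mult; [apply cp_const|apply cp_id].
Qed.

Lemma coef_facts (delta : R) (beta dbeta : R -> R)
  (Hdelta : 0 < delta)
  (Hpos : forall s, 0 <= s -> 0 < beta s)
  (Hc : forall s, 0 <= s -> continuity_pt beta s)
  (Hcont : forall s, 0 <= s -> continuity_pt dbeta s)
  (Hdec : forall s t, 0 <= s -> s < t -> beta t < beta s)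
  (Hlim : forall eps, 0 < eps -> exists M, forall S, M < S -> beta S < eps)
  (Hdb0 : delta < beta 0) :
  forall t0, 0 <= t0 < tau_bar beta delta ->
    0 <= Sstar beta delta t0 /\
    beta (Sstar beta delta t0) = delta / (2 * exp (- delta * t0) - 1) /\
    continuity_pt (Acoef beta delta) t0 /\
    continuity_pt (Bcoef beta dbeta delta) t0.
Proof.
  intros t0 Ht0.
  destruct (yv_range beta delta t0 Hdelta Hdb0 Ht0) as [Hd0 [Hy1 Hy2]].
  destruct (binv_spec beta Hc Hdec Hlim (delta / (2 * exp (- delta * t0) - 1)) ltac:(lra))
    as [Hs Hb].
  assert (HS : continuity_pt (Sstar beta delta) t0).
  { change (continuity_pt (fun t => beta_inv beta (delta / (2 * exp (- delta * t) - 1))) t0).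
    apply (cp_comp (beta_inv beta) (fun t => delta / (2 * exp (- delta * t) - 1))).
    - apply yv_cont; lra.
    - apply binv_cont; auto; lra. }
  unfold Sstar at 1 2. split; [auto|]. split; [auto|].
  assert (HbS : continuity_pt (fun t => beta (Sstar beta delta t)) t0).
  { apply (cp_comp beta (Sstar beta delta)); [exact HS | apply Hc; exact Hs]. }
  assert (HdS : continuity_pt (fun t => dbeta (Sstar beta delta t)) t0).
  { apply (cp_comp dbeta (Sstar beta delta)); [exact HS | apply Hcont; exact Hs]. }
  assert (Hex : forall c, continuity_pt (fun t => exp (c * t)) t0).
  { intros c. apply (cp_comp exp (fun t => c * t)); [|apply cp_exp].
    apply cp_mult; [apply cp_const|apply cp_id]. }
  split.
  - change (continuity_pt (fun t => delta + beta (Sstar beta delta t)) t0).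
    apply cp_plus; auto. apply cp_const.
  - change (continuity_pt (fun t => (2 * beta (Sstar beta delta t)
       + ((2 * exp (- delta * t) - 1) * exp (delta * t) * Sstar beta delta t)
         * dbeta (Sstar beta delta t)) * exp (- delta * t)) t0).
    apply cp_mult; [|apply Hex].
    apply cp_plus. apply cp_mult; [apply cp_const|exact HbS].
    apply cp_mult; [|exact HdS]. apply cp_mult; [|exact HS]. apply cp_mult; [|apply Hex].
    apply cp_minus; [|apply cp_const]. apply cp_mult; [apply cp_const|apply Hex].
Qed.

Definition ltb_R (t x : R) : bool := if Rlt_dec x t then true else false.
Definition cnt (l : list R) (t : R) : nat := length (filter (ltb_R t) l).

Lemma ltb_R_true t x : ltb_R t x = true <-> x < t.
Proof. unfold ltb_R; destruct (Rlt_dec x t); split; intros; auto; try discriminate; lra. Qed.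

Lemma ltbR_cases t x b : ltb_R t x = b -> if b then x < t else t <= x.
Proof. unfold ltb_R; destruct (Rlt_dec x t); intros <-; auto; lra. Qed.

Lemma below_gap (l : list R) (r : R) : exists a, a < r /\ forall x, In x l -> x < r -> x < a.
Proof.
  induction l as [|y l [a [Ha H]]].
  - exists (r - 1); split; [lra|]. intros x [].
  - destruct (Rlt_dec y r).
    + exists (Rmax a ((y + r)/2)). split.
      * apply Rmax_lub_lt; lra.
      * intros x [->|Hx] Hxr.
        -- pose proof (Rmax_r a ((x + r)/2)); lra.
        -- pose proof (Rmax_l a ((y + r)/2)); pose proof (H x Hx Hxr); lra.
    + exists a; split; auto. intros x [->|Hx] Hxr; [lra|auto].
Qed.

Lemma max_below (l : list R) (t x0 : R) : In x0 l -> x0 < t ->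
  exists r, In r l /\ r < t /\ forall x, In x l -> x < t -> x <= r.
Proof.
  revert x0. induction l as [|y l IH]; intros x0 Hin Hx0.
  - destruct Hin.
  - destruct (classic (exists x1, In x1 l /\ x1 < t)) as [[x1 [Hx1 Hx1t]]|Hno].
    + destruct (IH x1 Hx1 Hx1t) as [r [Hr1 [Hr2 Hr3]]].
      destruct (Rlt_dec y t).
      * exists (Rmax y r). split; [|split].
        -- unfold Rmax; destruct (Rle_dec y r); [right; auto| left; auto].
        -- apply Rmax_lub_lt; auto.
        -- intros x [->|Hx] Hxt. apply Rmax_l. pose proof (Rmax_r y r); pose proof (Hr3 x Hx Hxt); lra.
      * exists r; split; [right; auto|split; auto]. intros x [->|Hx] Hxt; [lra|auto].
    + destruct Hin as [->|Hin]; [|exfalso; apply Hno; eauto].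
      exists x0; split; [left; auto|split; auto].
      intros x [->|Hx] Hxt; [lra|]. exfalso; apply Hno; eauto.
Qed.

Lemma cnt_nonzero (l : list R) (t : R) : cnt l t <> 0%nat -> exists x, In x l /\ x < t.
Proof.
  unfold cnt. destruct (filter (ltb_R t) l) as [|x f] eqn:E; simpl; intros H; [lia|].
  exists x. assert (In x (filter (ltb_R t) l)) by (rewrite E; left; auto).
  apply filter_In in H0. destruct H0; split; auto. apply ltb_R_true; auto.
Qed.

Lemma cnt_zero (l : list R) (t x : R) : cnt l t = 0%nat -> In x l -> x < t -> False.
Proof.
  intros H Hx Hxt. unfold cnt in H.
  assert (In x (filter (ltb_R t) l)) by (apply filter_In; split; auto; apply ltb_R_true; auto).
  destruct (filter (ltb_R t) l); [destruct H0|discriminate].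
Qed.

Lemma cnt_same (l : list R) (a b : R) : a < b -> (forall x, In x l -> ~ (a <= x < b)) -> cnt l b = cnt l a.
Proof.
  intros Hab. unfold cnt. induction l as [|y l IH]; intros H; simpl; auto.
  assert (Hy := H y (or_introl eq_refl)).
  assert (IH' := IH (fun x Hx => H x (or_intror Hx))).
  destruct (ltb_R b y) eqn:E1, (ltb_R a y) eqn:E2; simpl; try rewrite IH'; auto;
   apply ltbR_cases in E1; apply ltbR_cases in E2; exfalso; apply Hy; lra.
Qed.

Lemma cnt_step (l : list R) (a b r : R) : NoDup l -> a < b -> In r l -> a <= r < b ->
  (forall x, In x l -> a <= x < b -> x = r) -> cnt l b = S (cnt l a).
Proof.
  intros Hnd Hab. induction Hnd as [|y l Hy Hnd IH]; intros Hr Hrab H.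
  - destruct Hr.
  - destruct Hr as [->|Hr].
    + assert (Hs : cnt l b = cnt l a).
      { apply cnt_same; auto. intros x Hx Hxab. rewrite (H x (or_intror Hx) Hxab) in Hx. auto. }
      unfold cnt in *. simpl.
      destruct (ltb_R b r) eqn:E1, (ltb_R a r) eqn:E2; simpl; try rewrite Hs; auto;
      apply ltbR_cases in E1; apply ltbR_cases in E2; lra.
    + assert (Hyr : ~ (a <= y < b)).
      { intros Hyab. rewrite (H y (or_introl eq_refl) Hyab) in Hy. auto. }
      assert (IH' := IH Hr Hrab (fun x Hx => H x (or_intror Hx))).
      unfold cnt in *. simpl.
      destruct (ltb_R b y) eqn:E1, (ltb_R a y) eqn:E2; simpl; try rewrite IH'; auto;
      apply ltbR_cases in E1; apply ltbR_cases in E2; exfalso; apply Hyr; lra.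
Qed.

Lemma cnt_all (l : list R) (t : R) : (forall x, In x l -> x < t) -> cnt l t = length l.
Proof.
  unfold cnt. induction l as [|y l IH]; intros H; simpl; auto.
  destruct (ltb_R t y) eqn:E1; apply ltbR_cases in E1.
  - simpl. rewrite IH; auto. intros; apply H; right; auto.
  - exfalso. assert (y < t) by (apply H; left; auto). lra.
Qed.

Lemma same_sign (Z : R -> R) (T : R) :
  (forall t, 0 <= t < T -> continuity_pt Z t) ->
  forall a b, 0 <= a -> a < b -> b < T -> (forall z, a <= z <= b -> Z z <> 0) ->
  (0 < Z a <-> 0 < Z b).
Proof.
  intros Hc a b Ha Hab HbT Hnz.
  assert (Za := Hnz a ltac:(lra)). assert (Zb := Hnz b ltac:(lra)).
  split; intros H.
  - destruct (Rlt_le_dec 0 (Z b)) as [|Hb]; auto. exfalso.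
    destruct (IVT_interv (fun x => - Z x) a b) as [z [Hz1 Hz2]]; try lra.
    + intros x Hx. apply (continuity_pt_opp Z); apply Hc; lra.
    + apply (Hnz z Hz1). lra.
  - destruct (Rlt_le_dec 0 (Z a)) as [|Ha']; auto. exfalso.
    destruct (IVT_interv Z a b) as [z [Hz1 Hz2]]; try lra.
    + intros x Hx. apply Hc; lra.
    + apply (Hnz z Hz1). lra.
Qed.

Lemma parity_main (Z : R -> R) (T : R) (l : list R)
  (Hc : forall t, 0 <= t < T -> continuity_pt Z t) (HT : 0 < T)
  (H0 : Z 0 < 0)
  (Hend : exists a, a < T /\ forall t, 0 <= t -> a < t < T -> Z t < 0)
  (Hnd : NoDup l)
  (HIn : forall t, In t l <-> (0 <= t < T /\ Z t = 0))
  (Hsc : forall t, In t l -> changes_sign_at Z t) :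
  Nat.Even (length l).
Proof.
  assert (Claim : forall n t, 0 <= t < T -> Z t <> 0 -> cnt l t = n -> (0 < Z t <-> Nat.Odd n)).
  { induction n as [|m IH]; intros t Ht Hzt Hcnt.
    - split; intros H.
      + exfalso.
        destruct (Req_dec t 0) as [E|E]. { subst; lra. }
        assert (Hs := same_sign Z T Hc 0 t ltac:(lra) ltac:(lra) ltac:(lra)).
        assert (~ (forall z, 0 <= z <= t -> Z z <> 0)).
        { intros Hn. apply Hs in Hn. apply Hn in H. lra. }
        apply H1. intros z Hz Hz0.
        destruct (Req_dec z t) as [->|Hne]; [auto|].
        apply (cnt_zero l t z Hcnt); [apply HIn; split; [lra|auto] | lra].
      + destruct H as [p Hp]; lia.
    - destruct (cnt_nonzero l t ltac:(lia)) as [x0 [Hx0 Hx0t]].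
      destruct (max_below l t x0 Hx0 Hx0t) as [r [Hr [Hrt Hmax]]].
      assert (Hr' := proj1 (HIn r) Hr). destruct Hr' as [Hr0 Zr].
      assert (Hrpos : 0 < r). { destruct (Req_dec r 0) as [E|E]; [rewrite E in Zr; lra | lra]. }
      destruct (Hsc r Hr) as [eps [Heps Hcase]].
      destruct (below_gap l r) as [a [Har Ha]].
      set (s' := (Rmax (Rmax a (r - eps)) 0 + r) / 2).
      pose proof (Rmax_l (Rmax a (r - eps)) 0). pose proof (Rmax_r (Rmax a (r - eps)) 0).
      pose proof (Rmax_l a (r - eps)). pose proof (Rmax_r a (r - eps)).
      assert (Hmr : Rmax (Rmax a (r - eps)) 0 < r).
      { apply Rmax_lub_lt; [apply Rmax_lub_lt|]; lra. }
      assert (Hs'1 : r - eps < s' < r) by (unfold s'; lra).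
      assert (Hs'2 : 0 < s' /\ a < s') by (unfold s'; lra).
      set (s := (r + Rmin (r + eps) t) / 2).
      pose proof (Rmin_l (r + eps) t). pose proof (Rmin_r (r + eps) t).
      assert (Hmin : r < Rmin (r + eps) t) by (apply Rmin_glb_lt; lra).
      assert (Hs1 : r < s < r + eps /\ s < t) by (unfold s; lra).
      assert (Hcnt' : cnt l s' = m).
      { assert (cnt l t = S (cnt l s')).
        { apply (cnt_step l s' t r); auto; try lra.
          intros x Hx Hxr. assert (x <= r) by (apply Hmax; auto; lra).
          destruct (Req_dec x r); auto. assert (x < a) by (apply Ha; auto; lra). lra. }
        lia. }
      assert (Hzs' : Z s' <> 0 /\ Z s <> 0 /\ (0 < Z s' <-> ~ 0 < Z s)).
      { destruct Hcase as [[Hl Hrr]|[Hl Hrr]].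
        - assert (Z s' < 0) by (apply Hl; lra). assert (0 < Z s) by (apply Hrr; lra).
          repeat split; intros; lra.
        - assert (0 < Z s') by (apply Hl; lra). assert (Z s < 0) by (apply Hrr; lra).
          repeat split; intros; lra. }
      destruct Hzs' as [Hzs' [Hzs Hopp]].
      assert (IH' := IH s' ltac:(lra) Hzs' Hcnt').
      assert (Hst : 0 < Z s <-> 0 < Z t).
      { apply (same_sign Z T Hc s t); try lra.
        intros z Hz Hz0. destruct (Req_dec z t) as [->|Hne]; [auto|].
        assert (In z l) by (apply HIn; split; [lra|auto]).
        assert (z <= r) by (apply Hmax; auto; lra). lra. }
      rewrite Nat.Odd_succ.
      destruct (Nat.Even_or_Odd m) as [Ev|Od].
      + split; intros; auto. apply Hst. destruct (Rlt_le_dec 0 (Z s)) as [|Hle]; auto.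
        exfalso. assert (HH : 0 < Z s') by (apply Hopp; lra). apply IH' in HH.
        apply (Nat.Even_Odd_False m); auto.
      + split; intros HZ.
        * apply Hst in HZ. assert (HH : ~ 0 < Z s') by (intro X; apply Hopp in X; auto).
          exfalso; apply HH, IH'; auto.
        * exfalso; apply (Nat.Even_Odd_False m); auto. }
  destruct Hend as [a0 [Ha0 Hend]].
  destruct (below_gap l T) as [a [HaT Ha]].
  set (t := (Rmax (Rmax a a0) 0 + T) / 2).
  pose proof (Rmax_l (Rmax a a0) 0). pose proof (Rmax_r (Rmax a a0) 0).
  pose proof (Rmax_l a a0). pose proof (Rmax_r a a0).
  assert (Hm : Rmax (Rmax a a0) 0 < T) by (apply Rmax_lub_lt; [apply Rmax_lub_lt|]; lra).
  assert (Zt : Z t < 0) by (apply Hend; unfold t; lra).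
  assert (Hc' : cnt l t = length l).
  { apply cnt_all. intros x Hx. assert (Hx' := proj1 (HIn x) Hx).
    assert (x < a) by (apply Ha; auto; lra). unfold t; lra. }
  assert (Cl := Claim (length l) t ltac:(unfold t; lra) ltac:(lra) Hc').
  destruct (Nat.Even_or_Odd (length l)) as [Ev|Od]; auto.
  apply Cl in Od. lra.
Qed.

Lemma acos_ge (r : R) : -1 < r < 0 -> PI / 2 <= acos r.
Proof.
  intros Hr. unfold acos.
  destruct (Rle_dec r (-1)); [lra|]. destruct (Rle_dec 1 r); [lra|].
  assert (Hs : 0 < sqrt (1 - r²)).
  { apply sqrt_lt_R0. unfold Rsqr. nra. }
  assert (r / sqrt (1 - r²) < 0).
  { unfold Rdiv. assert (0 < / sqrt (1 - r²)) by (apply Rinv_0_lt_compat; auto). nra. }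
  apply atan_increasing in H. rewrite atan_0 in H. lra.
Qed.

Lemma Zk_main (delta : R) (beta dbeta : R -> R) (tau_star : R) (j : nat) (tau : R) :
  let A := Acoef beta delta tau in let B := Bcoef beta dbeta delta tau in
  0 < A -> B < 0 -> A < - B ->
  0 < B ^ 2 - A ^ 2 /\ -1 < A / B < 0 /\
  Zk beta dbeta delta j tau = tau - (acos (A / B) + 2 * INR j * PI) / sqrt (B ^ 2 - A ^ 2).
Proof.
  intros A B HA HB HAB.
  split; [nra|]. split; [|reflexivity].
  split.
  - apply Rmult_lt_reg_r with (- B); [lra|].
    unfold Rdiv. replace (A * / B * - B) with (- A) by (field; lra). lra.
  - unfold Rdiv. assert (/ B < 0) by (apply Rinv_lt_0_compat; auto). nra.
Qed.

Theorem lemma5p3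
  (delta : R) (beta dbeta : R -> R) (tau_star : R)
  (Hdelta : 0 < delta)
  (Hpos : forall s, 0 <= s -> 0 < beta s)
  (Hderiv : forall s, 0 <= s -> derivable_pt_lim beta s (dbeta s))
  (Hcont : forall s, 0 <= s -> continuity_pt dbeta s)
  (Hdec : forall s t, 0 <= s -> s < t -> beta t < beta s)
  (Hdneg : forall s, 0 < s -> dbeta s < 0)
  (Hlim : forall eps, 0 < eps -> exists M, forall S, M < S -> beta S < eps)
  (Hdb0 : delta < beta 0)
  (H1 : forall y1 y2, 0 <= y1 -> y1 <= y2 -> y2 <= beta_inv beta delta ->
          y2 * dbeta y2 <= y1 * dbeta y1)
  (H2 : beta_inv beta delta * dbeta (beta_inv beta delta) < - 4 * delta)
  (Hts : 0 < tau_star < tau_bar beta delta)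
  (Hts_char : forall tau, 0 <= tau < tau_bar beta delta ->
     (Acoef beta delta tau < Rabs (Bcoef beta dbeta delta tau) <-> tau < tau_star))
  (HBneg : forall tau, 0 <= tau < tau_star -> Bcoef beta dbeta delta tau < 0) :
  forall k : nat,
    Zk beta dbeta delta k 0 < 0
    /\ (forall M, exists eps, 0 < eps /\
          forall tau, 0 <= tau -> tau_star - eps < tau < tau_star ->
            Zk beta dbeta delta k tau < M)
    /\ (forall l : list R, NoDup l ->
          (forall t, In t l <-> (0 <= t < tau_star /\ Zk beta dbeta delta k t = 0)) ->
          (forall t, In t l -> changes_sign_at (Zk beta dbeta delta k) t) ->
          Nat.Even (length l))
    /\ (forall tau, 0 <= tau < tau_star ->
          Zk beta dbeta delta (S k) tau < Zk beta dbeta delta k tau)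
    /\ ((forall tau, 0 <= tau < tau_star -> Zk beta dbeta delta k tau <> 0) ->
        forall j : nat, (k < j)%nat ->
          forall tau, 0 <= tau < tau_star -> Zk beta dbeta delta j tau <> 0).
Proof.
  intros k.
  assert (Hc : forall s, 0 <= s -> continuity_pt beta s).
  { intros s Hs; apply derivable_continuous_pt; exists (dbeta s); apply Hderiv; auto. }
  assert (CF := coef_facts delta beta dbeta Hdelta Hpos Hc Hcont Hdec Hlim Hdb0).
  assert (Key : forall tau, 0 <= tau < tau_star -> 0 < Acoef beta delta tau /\
     Bcoef beta dbeta delta tau < 0 /\ Acoef beta delta tau < - Bcoef beta dbeta delta tau).
  { intros tau Ht. destruct (CF tau ltac:(lra)) as [HS [Hb _]].
    assert (HB := HBneg tau Ht).
    split. { unfold Acoef. pose proof (Hpos _ HS). lra. }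
    split; auto. assert (H := proj2 (Hts_char tau ltac:(lra)) (proj2 Ht)).
    rewrite Rabs_left in H; auto. }
  set (D := fun t => Bcoef beta dbeta delta t ^ 2 - Acoef beta delta t ^ 2).
  assert (Zcont : forall j t, 0 <= t < tau_star -> continuity_pt (Zk beta dbeta delta j) t).
  { intros j t Ht. destruct (Key t Ht) as [HA [HB HAB]].
    destruct (Zk_main delta beta dbeta tau_star j t HA HB HAB) as [HD [Hr _]].
    destruct (CF t ltac:(lra)) as [_ [_ [CA CB]]].
    change (continuity_pt (fun t => t - (acos (Acoef beta delta t / Bcoef beta dbeta delta t)
       + 2 * INR j * PI) / sqrt (Bcoef beta dbeta delta t ^ 2 - Acoef beta delta t ^ 2)) t).
    apply cp_minus; [apply cp_id|].
    apply cp_div.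
    - apply cp_plus; [|apply cp_const].
      apply (cp_comp acos (fun t => Acoef beta delta t / Bcoef beta dbeta delta t)).
      + apply cp_div; auto; lra.
      + apply derivable_continuous_pt, derivable_pt_acos; cbv beta; lra.
    - apply (cp_comp sqrt (fun t => Bcoef beta dbeta delta t ^ 2 - Acoef beta delta t ^ 2)).
      + apply cp_minus; apply cp_sq; auto.
      + apply continuity_pt_sqrt; lra.
    - pose proof (sqrt_lt_R0 _ HD); lra. }
  assert (Zbound : forall j t, 0 <= t < tau_star ->
     0 < sqrt (D t) /\ Zk beta dbeta delta j t <= t - (PI / 2) / sqrt (D t)).
  { intros j t Ht. destruct (Key t Ht) as [HA [HB HAB]].
    destruct (Zk_main delta beta dbeta tau_star j t HA HB HAB) as [HD [Hr HZ]].
    pose proof (sqrt_lt_R0 _ HD) as Hs.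
    split; [exact Hs|]. rewrite HZ. unfold D.
    pose proof (acos_ge _ Hr). pose proof (pos_INR j). pose proof PI_RGT_0.
    assert (0 < / sqrt (Bcoef beta dbeta delta t ^ 2 - Acoef beta delta t ^ 2))
      by (apply Rinv_0_lt_compat; auto).
    set (a := acos (Acoef beta delta t / Bcoef beta dbeta delta t)) in *.
    set (x := / sqrt (Bcoef beta dbeta delta t ^ 2 - Acoef beta delta t ^ 2)) in *.
    assert (0 <= (a + 2 * INR j * PI - PI / 2) * x) by (apply Rmult_le_pos; nra).
    unfold Rdiv. fold x.
    assert (E : (a + 2 * INR j * PI) * x = PI * / 2 * x + (a + 2 * INR j * PI - PI / 2) * x) by (field).
    rewrite E. lra. }
  assert (Z0 : forall j, Zk beta dbeta delta j 0 < 0).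
  { intros j. destruct (Zbound j 0 ltac:(lra)) as [Hs HZ].
    pose proof PI_RGT_0. assert (0 < PI / 2 / sqrt (D 0)) by (apply Rdiv_lt_0_compat; lra). lra. }
  assert (Lim : forall M, exists eps, 0 < eps /\
          forall tau, 0 <= tau -> tau_star - eps < tau < tau_star ->
            Zk beta dbeta delta k tau < M).
  { intros M. pose proof PI_RGT_0.
    destruct (Rle_dec tau_star M) as [Hle|Hlt].
    - exists 1. split; [lra|]. intros tau H0 Ht.
      destruct (Zbound k tau ltac:(lra)) as [Hs HZ].
      assert (0 < PI / 2 / sqrt (D tau)) by (apply Rdiv_lt_0_compat; lra). lra.
    - set (c := (PI / 2) / (tau_star - M)).
      assert (Hcpos : 0 < c) by (apply Rdiv_lt_0_compat; lra).
      destruct (CF tau_star ltac:(lra)) as [_ [_ [CA CB]]].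
      assert (CD : continuity_pt D tau_star) by (apply cp_minus; apply cp_sq; auto).
      assert (HDs : D tau_star <= 0).
      { assert (Hn : ~ (Acoef beta delta tau_star < Rabs (Bcoef beta dbeta delta tau_star))).
        { intros Hx. apply (Hts_char tau_star ltac:(lra)) in Hx. lra. }
        unfold D. rewrite <- (pow2_abs (Bcoef beta dbeta delta tau_star)).
        pose proof (Rabs_pos (Bcoef beta dbeta delta tau_star)). nra. }
      destruct (cont_eps D tau_star CD (c ^ 2) ltac:(nra)) as [alp [Halp Hx]].
      exists alp. split; auto. intros tau H0 Ht.
      destruct (Zbound k tau ltac:(lra)) as [Hs HZ].
      assert (Hd := Hx tau ltac:(apply Rabs_def1; lra)). apply Rabs_def2 in Hd.
      assert (Hpos' : 0 <= D tau).
      { destruct (Key tau ltac:(lra)) as [HA [HB HAB]]. unfold D; nra. }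
      assert (Hsc : sqrt (D tau) < c).
      { rewrite <- (sqrt_pow2 c) by lra. apply sqrt_lt_1; nra. }
      assert (PI / 2 / c < PI / 2 / sqrt (D tau)).
      { unfold Rdiv. apply Rmult_lt_compat_l; [lra|]. apply Rinv_lt_contravar; nra. }
      assert (PI / 2 / c = tau_star - M) by (unfold c; field; lra).
      lra. }
  split; [apply Z0|]. split; [exact Lim|]. split.
  { intros l Hnd HIn Hsc.
    apply (parity_main (Zk beta dbeta delta k) tau_star l (Zcont k) (proj1 Hts) (Z0 k)); auto.
    destruct (Lim 0) as [eps [He Heps]]. exists (tau_star - eps). split; [lra|].
    intros t Ht0 Ht. apply Heps; auto; lra. }
  assert (Mono : forall i j tau, (i < j)%nat -> 0 <= tau < tau_star ->
     Zk beta dbeta delta j tau < Zk beta dbeta delta i tau).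
  { intros i j tau Hij Ht. destruct (Key tau Ht) as [HA [HB HAB]].
    destruct (Zk_main delta beta dbeta tau_star i tau HA HB HAB) as [HD [Hr Hi]].
    destruct (Zk_main delta beta dbeta tau_star j tau HA HB HAB) as [_ [_ Hj]].
    rewrite Hi, Hj. pose proof (sqrt_lt_R0 _ HD).
    assert (Hx : 0 < / sqrt (Bcoef beta dbeta delta tau ^ 2 - Acoef beta delta tau ^ 2))
      by (apply Rinv_0_lt_compat; auto).
    set (x := / sqrt (Bcoef beta dbeta delta tau ^ 2 - Acoef beta delta tau ^ 2)) in *.
    apply lt_INR in Hij. pose proof PI_RGT_0.
    assert (0 < (INR j - INR i) * PI * x) by (apply Rmult_lt_0_compat; [apply Rmult_lt_0_compat; lra | exact Hx]).
    set (a := acos (Acoef beta delta tau / Bcoef beta dbeta delta tau)).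
    unfold Rdiv. fold x.
    assert (E : (a + 2 * INR j * PI) * x = (a + 2 * INR i * PI) * x + 2 * ((INR j - INR i) * PI * x)) by ring.
    rewrite E. lra. }
  split.
  { intros tau Ht. apply Mono; auto. }
  intros Hno j Hkj tau Ht.
  assert (Zneg : Zk beta dbeta delta k tau < 0).
  { destruct (Req_dec tau 0) as [->|Hne]; [apply Z0|].
    assert (Hs := same_sign (Zk beta dbeta delta k) tau_star (Zcont k) 0 tau ltac:(lra)
       ltac:(lra) ltac:(lra) (fun z Hz => Hno z ltac:(lra))).
    assert (Hn := Hno tau Ht). pose proof (Z0 k).
    destruct (Rlt_le_dec 0 (Zk beta dbeta delta k tau)) as [Hp|Hp].
    - apply Hs in Hp; lra.
    - destruct (Rle_lt_or_eq_dec _ _ Hp); [auto|contradiction]. }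
  pose proof (Mono k j tau Hkj Ht). lra.
Qed.
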